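(* Let $X_0=0$ and $X_n=\sum_{j=1}^{X_{n-1}}\xi_{n,j}+\varepsilon_n$ for $n\ge1$, where $\{\xi_{n,j},\varepsilon_n\}$ are independent nonnegative integer-valued random variables with $\xi_{n,j}$, $j\in\mathbb N$, identically distributed for each $n$. Let $G_n(x)=\mathbb E x^{\xi_{n,1}}$, $H_n(x)=\mathbb E x^{\varepsilon_n}$, $\rho_n=G_n'(1)$, $G_n''(1)<\infty$, and $m_{n,k}=H_n^{(k)}(1)$ (the $k$-th factorial moment of $\varepsilon_n$, assumed finite for $k\le J$). Let $J\ge 2$ be an integer and assume (i) $\rho_n<1$, $\lim_{n}\rho_n=1$, $\sum_{n=1}^\infty(1-\rho_n)=\infty$, and $\lim_n G_n''(1)/(1-\rho_n)=0$; (ii) $\lim_{n\to\infty}\frac{m_{n,j}}{j(1-\rho_n)}=\lambda_j$ for $j=1,\dots,J$, with $\lambda_J=0$. Then $X_n$ converges in distribution to the compound Poisson distribution $\mathrm{CP}(\mu)$, where $\mu$ is the finite measure on $\{1,\dots,J-1\}$ given by $$\mu\{j\}=\frac{1}{j!}\sum_{i=0}^{J-j-1}\frac{(-1)^i}{i!}\lambda_{j+i},\qquad j=1,\dots,J-1.$$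
   Context: For a finite measure $\mu$ on $\{1,2,\dots\}$, the compound Poisson distribution $\mathrm{CP}(\mu)$ is the distribution on $\{0,1,2,\dots\}$ with generating function $x\mapsto\exp\{\sum_{j\ge1}\mu\{j\}(x^j-1)\}$, $x\in[0,1]$. *)

(* Defs.v *)
From Stdlib Require Import Reals Arith.
Open Scope R_scope.

Definition is_pmf (p : nat -> R) : Prop :=
  (forall k, 0 <= p k) /\ infinite_sum p 1.

Fixpoint fall (k j : nat) : R :=
  match j with
  | O => 1
  | S j' => fall k j' * (INR k - INR j')
  end.

(* the j-th factorial moment of p is finite and equals v ( = the j-th
   derivative at 1 of the generating function of p) *)
Definition fact_moment (p : nat -> R) (j : nat) (v : R) : Prop :=
  infinite_sum (fun k => fall k j * p k) v.

Definition delta0 (k : nat) : R := match k with O => 1 | _ => 0 end.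

Definition conv (p q : nat -> R) (n : nat) : R :=
  sum_f_R0 (fun i => p i * q (n - i)%nat) n.

Fixpoint convpow (p : nat -> R) (m : nat) : nat -> R :=
  match m with
  | O => delta0
  | S m' => conv (convpow p m') p
  end.

(* L n = law of X_n, where X_0 = 0 and
   X_n = sum_{j=1}^{X_{n-1}} xi_{n,j} + eps_n, all independent, xi_{n,j} ~ xi n,
   eps_n ~ eps n. *)
Definition is_law_of_process (xi eps : nat -> nat -> R) (L : nat -> nat -> R) : Prop :=
  L O = delta0 /\
  forall n k, infinite_sum
                (fun m => L n m * conv (convpow (xi (S n)) m) (eps (S n)) k)
                (L (S n) k).

(* p is the compound Poisson distribution CP(mu), mu supported on {1..N}:
   generating function x |-> exp (sum_j mu{j} (x^j - 1)) on [0,1] *)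
Definition is_CP (N : nat) (mu : nat -> R) (p : nat -> R) : Prop :=
  is_pmf p /\
  forall x, 0 <= x <= 1 ->
    infinite_sum (fun k => p k * x ^ k)
      (exp (sum_f_R0 (fun i => mu (S i) * (x ^ (S i) - 1)) (N - 1))).

Definition mu_of (J : nat) (lam : nat -> R) (j : nat) : R :=
  / INR (fact j) *
  sum_f_R0 (fun i => (-1) ^ i / INR (fact i) * lam (j + i)%nat) (J - j - 1).

(* Main.v *)
Require Import Defs.
From Stdlib Require Import Reals.
From Stdlib Require Import Arith Lra Lia ClassicalEpsilon.
From Coquelicot Require Series.
Open Scope R_scope.

Lemma Rabs_le_inv (a b : R) : Rabs a <= b -> - b <= a <= b.
Proof. unfold Rabs; destruct (Rcase_abs a); lra. Qed.

Lemma cv_le_loc (u v : nat -> R) (l1 l2 : R) (N0 : nat) :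
  (forall n, (n >= N0)%nat -> u n <= v n) -> Un_cv u l1 -> Un_cv v l2 -> l1 <= l2.
Proof.
  intros Hle Hu Hv. destruct (Rle_or_lt l1 l2) as [|Hlt]; auto.
  set (e := (l1 - l2)/2).
  assert (He : e > 0) by (unfold e; lra).
  destruct (Hu e He) as [N1 HN1]. destruct (Hv e He) as [N2 HN2].
  set (n := (N0 + N1 + N2)%nat).
  specialize (HN1 n ltac:(unfold n; lia)). specialize (HN2 n ltac:(unfold n; lia)).
  specialize (Hle n ltac:(unfold n; lia)).
  unfold Rdist in *. apply Rabs_def2 in HN1. apply Rabs_def2 in HN2. unfold e in *. lra.
Qed.

Lemma cv_const (c : R) : Un_cv (fun _ => c) c.
Proof. intros e He; exists 0%nat; intros; unfold Rdist; rewrite Rminus_diag, Rabs_R0; lra. Qed.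

Lemma cv_ext_loc (u v : nat -> R) (l : R) (N0 : nat) :
  (forall n, (n >= N0)%nat -> u n = v n) -> Un_cv u l -> Un_cv v l.
Proof.
  intros Heq Hu e He. destruct (Hu e He) as [N HN]. exists (N + N0)%nat.
  intros n Hn. rewrite <- Heq by lia. apply HN; lia.
Qed.

Lemma cv_ext (u v : nat -> R) (l : R) :
  (forall n, u n = v n) -> Un_cv u l -> Un_cv v l.
Proof. intros H; apply (cv_ext_loc u v l 0); auto. Qed.

Lemma cv_squeeze0 (u v : nat -> R) (N0 : nat) :
  (forall n, (n >= N0)%nat -> Rabs (u n) <= v n) -> Un_cv v 0 -> Un_cv u 0.
Proof.
  intros Hle Hv e He. destruct (Hv e He) as [N HN]. exists (N + N0)%nat.
  intros n Hn. specialize (HN n ltac:(lia)). specialize (Hle n ltac:(lia)).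
  unfold Rdist in *. rewrite Rminus_0_r in *. apply Rabs_def2 in HN.
  lra.
Qed.

Lemma cv_scal (u : nat -> R) (l c : R) : Un_cv u l -> Un_cv (fun n => c * u n) (c * l).
Proof. intros H. apply CV_mult; auto. apply cv_const. Qed.

Lemma cv_shift (u : nat -> R) (l : R) (k : nat) : Un_cv u l -> Un_cv (fun n => u (n + k)%nat) l.
Proof. intros H e He. destruct (H e He) as [N HN]. exists N. intros n Hn. apply HN; lia. Qed.

Lemma cv_abs0 (u : nat -> R) : Un_cv u 0 -> Un_cv (fun n => Rabs (u n)) 0.
Proof.
  intros H e He. destruct (H e He) as [N HN]. exists N. intros n Hn.
  specialize (HN n Hn). unfold Rdist in *. rewrite Rminus_0_r in *. rewrite Rabs_Rabsolu. auto.
Qed.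

Lemma cv_sum_seq (f : nat -> nat -> R) (l : nat -> R) (K : nat) :
  (forall k, (k <= K)%nat -> Un_cv (fun n => f k n) (l k)) ->
  Un_cv (fun n => sum_f_R0 (fun k => f k n) K) (sum_f_R0 l K).
Proof.
  induction K; intros H; simpl.
  - apply H; lia.
  - apply CV_plus. apply IHK; intros; apply H; lia. apply H; lia.
Qed.

Lemma IS_cv (a : nat -> R) (l : R) : infinite_sum a l <-> Un_cv (fun n => sum_f_R0 a n) l.
Proof. split; intro H; exact H. Qed.

Lemma IS_ext (a b : nat -> R) (l : R) : (forall k, a k = b k) -> infinite_sum a l -> infinite_sum b l.
Proof.
  intros H Ha. apply IS_cv. apply IS_cv in Ha. apply (cv_ext _ _ _ (fun n => sum_eq _ _ _ (fun i _ => H i))); auto.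
Qed.

Lemma IS_plus (a b : nat -> R) (A B : R) :
  infinite_sum a A -> infinite_sum b B -> infinite_sum (fun k => a k + b k) (A + B).
Proof.
  intros Ha Hb. apply IS_cv. apply (cv_ext (fun n => sum_f_R0 a n + sum_f_R0 b n)).
  intros; rewrite sum_plus; auto. apply CV_plus; auto.
Qed.

Lemma IS_scal (a : nat -> R) (A c : R) :
  infinite_sum a A -> infinite_sum (fun k => c * a k) (c * A).
Proof.
  intros Ha. apply IS_cv. apply (cv_ext (fun n => c * sum_f_R0 a n)).
  intros; rewrite scal_sum; apply sum_eq; intros; ring. apply cv_scal; auto.
Qed.

Lemma IS_minus (a b : nat -> R) (A B : R) :
  infinite_sum a A -> infinite_sum b B -> infinite_sum (fun k => a k - b k) (A - B).
Proof.
  intros Ha Hb. apply (IS_ext (fun k => a k + (-1) * b k)). intros; ring.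
  replace (A - B) with (A + (-1) * B) by ring. apply IS_plus; auto. apply IS_scal; auto.
Qed.

Lemma IS_unique (a : nat -> R) (A B : R) : infinite_sum a A -> infinite_sum a B -> A = B.
Proof. apply uniqueness_sum. Qed.

Lemma IS_le (a b : nat -> R) (A B : R) :
  (forall k, a k <= b k) -> infinite_sum a A -> infinite_sum b B -> A <= B.
Proof.
  intros H Ha Hb. apply (cv_le_loc _ _ _ _ 0 (fun n _ => sum_Rle _ _ n (fun i _ => H i)) Ha Hb).
Qed.

Lemma IS_partial_le (a : nat -> R) (A : R) (n : nat) :
  (forall k, 0 <= a k) -> infinite_sum a A -> sum_f_R0 a n <= A.
Proof.
  intros H Ha. apply (cv_le_loc (fun _ => sum_f_R0 a n) (fun m => sum_f_R0 a m) _ _ n).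
  - intros m Hm. induction Hm. lra. simpl. specialize (H (S m)). lra.
  - apply cv_const.
  - exact Ha.
Qed.

Lemma IS_nonneg (a : nat -> R) (A : R) : (forall k, 0 <= a k) -> infinite_sum a A -> 0 <= A.
Proof. intros H Ha. pose proof (IS_partial_le a A 0 H Ha). simpl in *. specialize (H 0%nat). lra. Qed.

Lemma IS_term_le (a : nat -> R) (A : R) (n : nat) : (forall k, 0 <= a k) -> infinite_sum a A -> a n <= A.
Proof.
  intros H Ha. pose proof (IS_partial_le a A n H Ha). destruct n. simpl in *; lra.
  simpl in H0. assert (0 <= sum_f_R0 a n). { clear H0. induction n; simpl. apply H. specialize (H (S n)). lra. }
  lra.
Qed.

Lemma IS_abs_le (a b : nat -> R) (A B : R) :
  (forall k, Rabs (a k) <= b k) -> infinite_sum a A -> infinite_sum b B -> Rabs A <= B.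
Proof.
  intros H Ha Hb. apply Rabs_le. split.
  - assert (Hn : infinite_sum (fun k => -1 * b k) (-1 * B)) by (apply IS_scal; auto).
    assert (- B <= A). { replace (-B) with (-1 * B) by ring. refine (IS_le _ _ _ _ _ Hn Ha). intros k.
      specialize (H k). apply Rabs_le_inv in H. lra. } lra.
  - apply (IS_le _ _ _ _ (fun k => Rle_trans _ _ _ (Rle_abs _) (H k)) Ha Hb).
Qed.

Lemma IS_exists_nonneg (a : nat -> R) (B : R) :
  (forall k, 0 <= a k) -> (forall n, sum_f_R0 a n <= B) -> exists A, infinite_sum a A.
Proof.
  intros H Hb. assert (Hg : Un_growing (fun n => sum_f_R0 a n)).
  { intros n; simpl. specialize (H (S n)). lra. }
  assert (Hu : has_ub (fun n => sum_f_R0 a n)). { exists B. intros x [n ->]. apply Hb. }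
  destruct (growing_cv _ Hg Hu) as [l Hl]. exists l. exact Hl.
Qed.

Lemma IS_exists_le (a b : nat -> R) (B : R) :
  (forall k, 0 <= a k <= b k) -> infinite_sum b B -> exists A, infinite_sum a A.
Proof.
  intros H Hb. apply (IS_exists_nonneg a B). intros k; apply H.
  intros n. apply Rle_trans with (sum_f_R0 b n). apply sum_Rle; intros; apply H.
  apply IS_partial_le; auto. intros k; specialize (H k); lra.
Qed.

Definition pgf (p : nat -> R) (x : R) : R :=
  epsilon (inhabits 0) (fun l => infinite_sum (fun k => p k * x ^ k) l).

Lemma pgf_spec (p : nat -> R) (x : R) (l : R) :
  infinite_sum (fun k => p k * x ^ k) l -> pgf p x = l.
Proof.
  intros H. unfold pgf. apply (IS_unique (fun k => p k * x ^ k)); auto.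
  apply (epsilon_spec (inhabits 0) (fun l => infinite_sum (fun k => p k * x ^ k) l)). eauto.
Qed.

Lemma pmf_pgf (p : nat -> R) (x : R) : is_pmf p -> 0 <= x <= 1 ->
  infinite_sum (fun k => p k * x ^ k) (pgf p x) /\ 0 <= pgf p x <= 1.
Proof.
  intros [Hp Hs] Hx.
  assert (Hb : forall k, 0 <= p k * x ^ k <= p k).
  { intros k. split. apply Rmult_le_pos; auto. apply pow_le; lra.
    rewrite <- (Rmult_1_r (p k)) at 2. apply Rmult_le_compat_l; auto.
    rewrite <- (pow1 k). apply pow_incr; lra. }
  destruct (IS_exists_le _ _ _ Hb Hs) as [A HA].
  rewrite (pgf_spec _ _ _ HA). split; auto. split.
  apply (IS_nonneg _ _ (fun k => proj1 (Hb k)) HA).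
  apply (IS_le _ _ _ _ (fun k => proj2 (Hb k)) HA Hs).
Qed.

Lemma pmf_pgf1 (p : nat -> R) : is_pmf p -> pgf p 1 = 1.
Proof.
  intros [Hp Hs]. apply pgf_spec. apply (IS_ext p). intros; rewrite pow1; ring. auto.
Qed.

Lemma conv_nonneg (p q : nat -> R) : (forall k, 0 <= p k) -> (forall k, 0 <= q k) ->
  forall n, 0 <= conv p q n.
Proof.
  intros Hp Hq n. unfold conv. apply cond_pos_sum. intros; apply Rmult_le_pos; auto.
Qed.

Lemma conv_IS (p q : nat -> R) (x A B : R) :
  (forall k, 0 <= p k) -> (forall k, 0 <= q k) -> 0 <= x ->
  infinite_sum (fun k => p k * x ^ k) A -> infinite_sum (fun k => q k * x ^ k) B ->
  infinite_sum (fun k => conv p q k * x ^ k) (A * B).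
Proof.
  intros Hp Hq Hx HA HB.
  apply Series.is_series_Reals in HA. apply Series.is_series_Reals in HB.
  pose proof (Series.is_series_mult_pos _ _ _ _ HA HB
     (fun n => Rmult_le_pos _ _ (Hp n) (pow_le _ n Hx))
     (fun n => Rmult_le_pos _ _ (Hq n) (pow_le _ n Hx))) as H.
  apply Series.is_series_Reals in H. revert H. apply IS_ext. intros n.
  unfold conv. rewrite Rmult_comm, scal_sum. apply sum_eq. intros i Hi.
  assert (E : x ^ n = x ^ i * x ^ (n - i)) by (rewrite <- pow_add; f_equal; lia). rewrite E. ring.
Qed.

Lemma delta0_IS (x : R) : infinite_sum (fun k => delta0 k * x ^ k) 1.
Proof.
  apply IS_cv. apply (cv_ext (fun _ => 1)). intros n. induction n; simpl. ring.
  rewrite <- IHn. ring. apply cv_const.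
Qed.

Lemma convpow_nonneg (p : nat -> R) : (forall k, 0 <= p k) -> forall m k, 0 <= convpow p m k.
Proof.
  intros Hp m. induction m; intros k; simpl.
  - destruct k; simpl; lra.
  - apply conv_nonneg; auto.
Qed.

Lemma convpow_IS (p : nat -> R) (x G : R) :
  (forall k, 0 <= p k) -> 0 <= x -> infinite_sum (fun k => p k * x ^ k) G ->
  forall m, infinite_sum (fun k => convpow p m k * x ^ k) (G ^ m).
Proof.
  intros Hp Hx HG m. induction m; simpl.
  - apply delta0_IS.
  - rewrite Rmult_comm. apply conv_IS; auto. apply convpow_nonneg; auto.
Qed.

Lemma sum_swap (a : nat -> nat -> R) (M K : nat) :
  sum_f_R0 (fun k => sum_f_R0 (fun m => a m k) M) K =
  sum_f_R0 (fun m => sum_f_R0 (fun k => a m k) K) M.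
Proof.
  induction K; simpl. auto. rewrite IHK. rewrite <- sum_plus. auto.
Qed.

Lemma IS_sum_finite (a : nat -> nat -> R) (r : nat -> R) (M : nat) :
  (forall m, (m <= M)%nat -> infinite_sum (a m) (r m)) ->
  infinite_sum (fun k => sum_f_R0 (fun m => a m k) M) (sum_f_R0 r M).
Proof.
  induction M; intros H; simpl.
  - apply H; lia.
  - apply IS_plus. apply IHM; intros; apply H; lia. apply H; lia.
Qed.

Lemma partial_nonneg (a : nat -> R) n : (forall k, 0 <= a k) -> 0 <= sum_f_R0 a n.
Proof. intros H. apply cond_pos_sum. auto. Qed.

Lemma IS_interchange (a : nat -> nat -> R) (r c : nat -> R) (R0 : R) :
  (forall m k, 0 <= a m k) ->
  (forall m, infinite_sum (fun k => a m k) (r m)) ->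
  (forall k, infinite_sum (fun m => a m k) (c k)) ->
  infinite_sum r R0 -> infinite_sum c R0.
Proof.
  intros Hpos Hr Hc HR.
  assert (Hc0 : forall k, 0 <= c k) by (intros k; apply (IS_nonneg _ _ (fun m => Hpos m k) (Hc k))).
  assert (Hr0 : forall m, 0 <= r m) by (intros m; apply (IS_nonneg _ _ (fun k => Hpos m k) (Hr m))).
  assert (H2 : forall K, sum_f_R0 c K <= R0).
  { intros K.
    assert (H := IS_sum_finite (fun k m => a m k) c K (fun k _ => Hc k)).
    apply (IS_le _ _ _ _ (fun m => IS_partial_le _ _ K (fun k => Hpos m k) (Hr m)) H HR). }
  destruct (IS_exists_nonneg c R0 Hc0 H2) as [Cs HCs].
  assert (H3 : Cs <= R0).
  { apply (cv_le_loc (fun n => sum_f_R0 c n) (fun _ => R0) _ _ 0); auto. apply cv_const. }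
  assert (H4 : forall M, sum_f_R0 r M <= Cs).
  { intros M. assert (H := IS_sum_finite a r M (fun m _ => Hr m)).
    apply (IS_le _ _ _ _ (fun k => IS_partial_le _ _ M (fun m => Hpos m k) (Hc k)) H HCs). }
  assert (H5 : R0 <= Cs).
  { apply (cv_le_loc (fun n => sum_f_R0 r n) (fun _ => Cs) _ _ 0); auto. apply cv_const. }
  replace R0 with Cs by lra. auto.
Qed.

Fixpoint fpr (xi eps : nat -> nat -> R) (n : nat) (x : R) : R :=
  match n with
  | O => 1
  | S n' => fpr xi eps n' (pgf (xi (S n')) x) * pgf (eps (S n')) x
  end.

Lemma law_pgf (xi eps L : nat -> nat -> R) :
  (forall n, (1 <= n)%nat -> is_pmf (xi n)) ->
  (forall n, (1 <= n)%nat -> is_pmf (eps n)) ->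
  is_law_of_process xi eps L ->
  forall n, (forall k, 0 <= L n k) /\
    forall x, 0 <= x <= 1 -> infinite_sum (fun k => L n k * x ^ k) (fpr xi eps n x).
Proof.
  intros Hxi Heps [HL0 HL]. induction n as [|n [Hnn Hpg]].
  - rewrite HL0. split. intros k; destruct k; simpl; lra.
    intros x _. simpl. apply delta0_IS.
  - assert (Px := Hxi (S n) ltac:(lia)). assert (Pe := Heps (S n) ltac:(lia)).
    assert (Hcn : forall m k, 0 <= conv (convpow (xi (S n)) m) (eps (S n)) k).
    { intros m k. apply conv_nonneg. apply convpow_nonneg. apply Px. apply Pe. }
    split.
    + intros k. apply (IS_nonneg _ _ (fun m => Rmult_le_pos _ _ (Hnn m) (Hcn m k)) (HL n k)).
    + intros x Hx. simpl.
      destruct (pmf_pgf _ x Px Hx) as [HG HGb]. destruct (pmf_pgf _ x Pe Hx) as [HH HHb].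
      set (G := pgf (xi (S n)) x) in *. set (H := pgf (eps (S n)) x) in *.
      apply (IS_interchange (fun m k => L n m * conv (convpow (xi (S n)) m) (eps (S n)) k * x ^ k)
               (fun m => L n m * (G ^ m * H))).
      * intros m k. apply Rmult_le_pos. apply Rmult_le_pos; auto. apply pow_le; lra.
      * intros m. apply (IS_ext (fun k => L n m * (conv (convpow (xi (S n)) m) (eps (S n)) k * x ^ k))).
        intros; ring. apply IS_scal. apply conv_IS; auto. apply convpow_nonneg; apply Px. apply Pe. lra.
        apply convpow_IS; auto. apply Px. lra.
      * intros k. apply (IS_ext (fun m => x ^ k * (L n m * conv (convpow (xi (S n)) m) (eps (S n)) k))).
        intros; ring. rewrite Rmult_comm. apply IS_scal. apply HL.
      * apply (IS_ext (fun m => H * (L n m * G ^ m))). intros; ring.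
        rewrite Rmult_comm. apply IS_scal. apply Hpg. auto.
Qed.

Definition bc (k j : nat) : R := fall k j / INR (fact j).

Fixpoint tsum (k : nat) (t : R) (J : nat) : R :=
  match J with O => 0 | S J' => tsum k t J' + bc k J' * t ^ J' end.

Fixpoint msum (mm : nat -> R) (t : R) (J : nat) : R :=
  match J with O => 0 | S J' => msum mm t J' + mm J' / INR (fact J') * t ^ J' end.

Lemma fall_S k j : fall (S k) (S j) = INR (S k) * fall k j.
Proof.
  induction j. simpl. ring. 
  change (fall (S k) (S (S j))) with (fall (S k) (S j) * (INR (S k) - INR (S j))).
  rewrite IHj. change (fall k (S j)) with (fall k j * (INR k - INR j)).
  rewrite !S_INR. ring.
Qed.

Lemma bc_rec k j : bc (S k) (S j) = bc k (S j) + bc k j.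
Proof.
  unfold bc. rewrite fall_S. change (fall k (S j)) with (fall k j * (INR k - INR j)).
  rewrite fact_simpl, mult_INR. pose proof (INR_fact_lt_0 j). rewrite !S_INR.
  pose proof (pos_INR j). field. lra.
Qed.

Lemma bc_0 k : bc k 0 = 1.
Proof. unfold bc; simpl. field. Qed.

Lemma fall_0S j : fall 0 (S j) = 0.
Proof. induction j. simpl. ring. change (fall 0 (S (S j))) with (fall 0 (S j) * (INR 0 - INR (S j))). rewrite IHj. ring. Qed.

Lemma bc_0S j : bc 0 (S j) = 0.
Proof. unfold bc. rewrite fall_0S. unfold Rdiv; ring. Qed.

Lemma bc_nonneg k j : 0 <= bc k j.
Proof.
  revert j. induction k; intros j.
  - destruct j. rewrite bc_0; lra. rewrite bc_0S; lra.
  - destruct j. rewrite bc_0; lra. rewrite bc_rec. pose proof (IHk (S j)). pose proof (IHk j). lra.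
Qed.

Lemma fall_nonneg k j : 0 <= fall k j.
Proof.
  pose proof (bc_nonneg k j). unfold bc in H. pose proof (INR_fact_lt_0 j).
  replace (fall k j) with (fall k j / INR (fact j) * INR (fact j)) by (field; lra).
  apply Rmult_le_pos; lra.
Qed.

Lemma tsum_rec k t J : tsum (S k) t (S J) = tsum k t (S J) + t * tsum k t J.
Proof.
  induction J.
  - simpl. rewrite !bc_0. ring.
  - change (tsum (S k) t (S (S J))) with (tsum (S k) t (S J) + bc (S k) (S J) * t ^ (S J)).
    rewrite IHJ, bc_rec. simpl. ring.
Qed.

Lemma tsum_0 t J : tsum 0 t (S J) = 1.
Proof.
  induction J. simpl. rewrite bc_0. ring.
  change (tsum 0 t (S (S J))) with (tsum 0 t (S J) + bc 0 (S J) * t ^ (S J)).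
  rewrite IHJ, bc_0S. ring.
Qed.

Lemma pow_le1 (y : R) (k : nat) : 0 <= y <= 1 -> y ^ k <= 1.
Proof. intros H. induction k; simpl. lra. pose proof (pow_le y k (proj1 H)). nra. Qed.

Lemma taylor_term (t : R) : -1 <= t <= 0 -> forall k J,
  Rabs ((1 + t) ^ k - tsum k t J) <= bc k J * Rabs t ^ J.
Proof.
  intros Ht k. induction k; intros J.
  - destruct J. simpl. rewrite bc_0. rewrite Rminus_0_r, Rabs_R1. lra.
    rewrite tsum_0. simpl. rewrite Rminus_diag, Rabs_R0. apply Rmult_le_pos. apply bc_nonneg.
    apply Rmult_le_pos. apply Rabs_pos. apply pow_le, Rabs_pos.
  - destruct J.
    + simpl tsum. rewrite bc_0, Rminus_0_r. simpl. rewrite Rabs_mult.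
      assert (Rabs ((1 + t) ^ k) <= 1).
      { rewrite <- RPow_abs. apply pow_le1. split. apply Rabs_pos.
        unfold Rabs; destruct (Rcase_abs _); lra. }
      assert (Rabs (1 + t) <= 1) by (unfold Rabs; destruct (Rcase_abs _); lra).
      pose proof (Rabs_pos (1+t)). pose proof (Rabs_pos ((1+t)^k)). nra.
    + rewrite tsum_rec.
      replace ((1 + t) ^ S k - (tsum k t (S J) + t * tsum k t J))
        with (((1 + t) ^ k - tsum k t (S J)) + t * ((1 + t) ^ k - tsum k t J)) by (simpl; ring).
      eapply Rle_trans. apply Rabs_triang. rewrite Rabs_mult.
      specialize (IHk (S J)) as H1. specialize (IHk J) as H2.
      rewrite bc_rec. 
      assert (H3 : Rabs t * Rabs ((1 + t) ^ k - tsum k t J) <= Rabs t * (bc k J * Rabs t ^ J))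
        by (apply Rmult_le_compat_l; [apply Rabs_pos | exact H2]).
      simpl pow in *. lra.
Qed.

Lemma moment_IS (p : nat -> R) (mm : nat -> R) (t : R) (J : nat) :
  (forall j, (j < J)%nat -> fact_moment p j (mm j)) ->
  infinite_sum (fun k => p k * tsum k t J) (msum mm t J).
Proof.
  induction J; intros H; simpl.
  - apply (IS_ext (fun _ => 0)). intros; ring.
    apply IS_cv. apply (cv_ext (fun _ => 0)). intros n; induction n; simpl; auto. rewrite <- IHn; ring.
    apply cv_const.
  - apply (IS_ext (fun k => p k * tsum k t J + (t ^ J / INR (fact J)) * (fall k J * p k))).
    intros k. unfold bc, Rdiv. ring.
    apply IS_plus. apply IHJ; intros; apply H; lia.
    replace (mm J / INR (fact J) * t ^ J) with (t ^ J / INR (fact J) * mm J) by (set (y := t ^ J); unfold Rdiv; ring).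
    apply IS_scal. apply H. lia.
Qed.

Lemma pgf_taylor (p : nat -> R) (mm : nat -> R) (x : R) (J : nat) :
  is_pmf p -> 0 <= x <= 1 ->
  (forall j, (j <= J)%nat -> fact_moment p j (mm j)) ->
  Rabs (pgf p x - msum mm (x - 1) J) <= mm J / INR (fact J) * (1 - x) ^ J.
Proof.
  intros Hp Hx Hm. destruct (pmf_pgf p x Hp Hx) as [HG _].
  assert (H1 := moment_IS p mm (x - 1) J (fun j Hj => Hm j ltac:(lia))).
  assert (H2 := IS_minus _ _ _ _ HG H1).
  assert (H3 : infinite_sum (fun k => ((1 - x) ^ J / INR (fact J)) * (fall k J * p k))
                 (((1 - x) ^ J / INR (fact J)) * mm J)).
  { apply IS_scal. apply Hm. lia. }
  replace (mm J / INR (fact J) * (1 - x) ^ J) with ((1 - x) ^ J / INR (fact J) * mm J) by (unfold Rdiv; ring).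
  refine (IS_abs_le _ _ _ _ _ H2 H3). intros k.
  replace (p k * x ^ k - p k * tsum k (x - 1) J) with (p k * ((1 + (x - 1)) ^ k - tsum k (x - 1) J))
    by (replace (1 + (x - 1)) with x by ring; ring).
  rewrite Rabs_mult. destruct Hp as [Hp0 _].
  rewrite (Rabs_right (p k)) by (apply Rle_ge; auto).
  pose proof (taylor_term (x - 1) ltac:(lra) k J).
  replace (Rabs (x - 1)) with (1 - x) in H by (unfold Rabs; destruct (Rcase_abs _); lra).
  unfold bc in H.
  replace ((1 - x) ^ J / INR (fact J) * (fall k J * p k)) with (p k * (fall k J / INR (fact J) * (1 - x) ^ J))
    by (unfold Rdiv; ring).
  apply Rmult_le_compat_l; auto.
Qed.

Lemma bernoulli (x : R) (k : nat) : 0 <= x -> 1 + INR k * (x - 1) <= x ^ k.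
Proof.
  intros Hx. induction k. simpl. lra.
  rewrite S_INR. simpl. pose proof (pos_INR k).
  assert (x * (1 + INR k * (x - 1)) <= x * x ^ k) by (apply Rmult_le_compat_l; auto).
  assert (0 <= INR k * ((x - 1) * (x - 1))) by (apply Rmult_le_pos; [auto | apply Rle_0_sqr]). nra.
Qed.

Lemma pgf_lower (p : nat -> R) (r x : R) :
  is_pmf p -> 0 <= x <= 1 -> fact_moment p 1 r -> 1 + r * (x - 1) <= pgf p x.
Proof.
  intros Hp Hx Hr. destruct (pmf_pgf p x Hp Hx) as [HG _]. destruct Hp as [Hp0 Hs].
  assert (H : infinite_sum (fun k => p k + (x - 1) * (fall k 1 * p k)) (1 + (x - 1) * r)).
  { apply IS_plus; auto. apply IS_scal; auto. }
  replace (1 + r * (x - 1)) with (1 + (x - 1) * r) by ring.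
  refine (IS_le _ _ _ _ _ H HG). intros k. simpl fall.
  pose proof (bernoulli x k ltac:(lra)). specialize (Hp0 k).
  assert (p k * (1 + INR k * (x - 1)) <= p k * x ^ k) by (apply Rmult_le_compat_l; auto).
  change (INR 0) with 0. lra.
Qed.

Lemma exp_le_mono x y : x <= y -> exp x <= exp y.
Proof. intros H. destruct (Rle_lt_or_eq_dec _ _ H). left; apply exp_increasing; auto. subst; lra. Qed.

Lemma exp_m1_bound y : Rabs (exp y - 1) <= Rabs y * exp (Rabs y).
Proof.
  pose proof (exp_ineq1_le y). pose proof (exp_ineq1_le (- y)).
  rewrite exp_Ropp in H0. pose proof (exp_pos y).
  destruct (Rle_or_lt 0 y).
  - rewrite Rabs_right by lra. rewrite Rabs_right by lra.
    (* e^y - 1 <= y e^y  <=> 1 - e^-y <= y *)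
    assert (exp y * (1 - y) <= 1).
    { apply Rmult_le_reg_r with (/ exp y). apply Rinv_0_lt_compat; auto.
      rewrite Rmult_comm, <- Rmult_assoc, Rinv_l by lra. lra. }
    nra.
  - assert (exp y < 1) by (rewrite <- exp_0; apply exp_increasing; lra).
    rewrite (Rabs_left y) by lra. rewrite Rabs_left1 by lra.
    assert (1 <= exp (- y)) by (pose proof (exp_ineq1_le (-y)); lra).
    assert (- y * 1 <= - y * exp (- y)) by (apply Rmult_le_compat_l; lra). lra.
Qed.

Lemma exp_m1y_bound y : Rabs (exp y - 1 - y) <= y ^ 2 * exp (Rabs y).
Proof.
  pose proof (exp_ineq1_le y). pose proof (exp_ineq1_le (- y)).
  rewrite exp_Ropp in H0. pose proof (exp_pos y).
  assert (Hk : exp y * (1 - y) <= 1).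
  { apply Rmult_le_reg_r with (/ exp y). apply Rinv_0_lt_compat; auto.
    rewrite Rmult_comm, <- Rmult_assoc, Rinv_l by lra. lra. }
  assert (H1x : 0 <= exp y - 1 - y) by lra.
  assert (H2x : exp y - 1 - y <= y * (exp y - 1)) by nra.
  rewrite Rabs_right by lra.
  pose proof (exp_m1_bound y).
  assert (y * (exp y - 1) <= Rabs y * Rabs (exp y - 1)).
  { rewrite <- Rabs_mult. apply Rle_abs. }
  assert (Rabs y * Rabs (exp y - 1) <= Rabs y * (Rabs y * exp (Rabs y))).
  { apply Rmult_le_compat_l; auto. apply Rabs_pos. }
  replace (y ^ 2) with (Rabs y * Rabs y) by (rewrite <- pow2_abs; ring). lra.
Qed.



Lemma Tpow_bound (u a : R) (i : nat) : 0 <= u <= 1 -> 0 <= a <= 1 ->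
  Rabs (u ^ S i - a ^ S i - INR (S i) * a ^ i * (u - a)) <= INR (S i) ^ 2 * (u - a) ^ 2.
Proof.
  intros Hu Ha. induction i.
  - simpl. replace (u * 1 - a * 1 - 1 * 1 * (u - a)) with 0 by ring. rewrite Rabs_R0.
    apply Rmult_le_pos. lra. apply pow2_ge_0.
  - replace (u ^ S (S i) - a ^ S (S i) - INR (S (S i)) * a ^ S i * (u - a))
      with (u * (u ^ S i - a ^ S i - INR (S i) * a ^ i * (u - a)) + INR (S i) * a ^ i * (u - a) ^ 2)
      by (rewrite (S_INR (S i)); simpl; ring).
    eapply Rle_trans. apply Rabs_triang. rewrite !Rabs_mult.
    assert (Rabs u <= 1) by (rewrite Rabs_right; lra).
    assert (Rabs (a ^ i) <= 1) by (rewrite Rabs_right; [apply pow_le1; lra | apply Rle_ge, pow_le; lra]).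
    assert (Rabs ((u - a) ^ 2) = (u - a) ^ 2) by (rewrite Rabs_right; [auto | apply Rle_ge, pow2_ge_0]).
    rewrite H1. rewrite (Rabs_right (INR (S i))) by (apply Rle_ge, pos_INR).
    pose proof (pos_INR (S i)). pose proof (pow2_ge_0 (u - a)).
    assert (A1 : Rabs u * Rabs (u ^ S i - a ^ S i - INR (S i) * a ^ i * (u - a)) <= INR (S i) ^ 2 * (u - a) ^ 2).
    { pose proof (Rabs_pos u). pose proof (Rabs_pos (u ^ S i - a ^ S i - INR (S i) * a ^ i * (u - a))).
      eapply Rle_trans; [| apply IHi]. rewrite <- (Rmult_1_l (Rabs (_ - _))) at 2.
      apply Rmult_le_compat_r; auto. }
    assert (A2 : INR (S i) * Rabs (a ^ i) * (u - a) ^ 2 <= INR (S i) * (u - a) ^ 2).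
    { apply Rmult_le_compat_r; auto. rewrite <- (Rmult_1_r (INR (S i))) at 2.
      apply Rmult_le_compat_l; auto. }
    assert (A3 : INR (S i) ^ 2 * (u - a) ^ 2 + INR (S i) * (u - a) ^ 2 <= (INR (S i) + 1) ^ 2 * (u - a) ^ 2) by nra.
    rewrite (S_INR (S i)). lra.
Qed.

Section Loc.
Variable c : nat -> R.
Variable N : nat.

Definition Pp (a : R) := sum_f_R0 (fun i => c i * a ^ S i) N.
Definition Mp (a : R) := sum_f_R0 (fun i => c i * INR (S i) * a ^ i) N.
Definition CPc := sum_f_R0 (fun i => Rabs (c i)) N.
Definition CMc := sum_f_R0 (fun i => Rabs (c i) * INR (S i)) N.
Definition C2c := sum_f_R0 (fun i => Rabs (c i) * INR (S i) ^ 2) N.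
Definition CDc := CMc + C2c.

Definition delta_loc (s g e1 : R) :=
  exp CPc * (CDc * exp CDc * (s + g) * (s * CMc + e1) + CMc * g
             + (C2c + CDc ^ 2 * exp CDc) * (s + g) ^ 2 + e1).

Lemma CPc_nonneg : 0 <= CPc.
Proof. apply cond_pos_sum; intros; apply Rabs_pos. Qed.
Lemma CMc_nonneg : 0 <= CMc.
Proof. apply cond_pos_sum; intros; apply Rmult_le_pos. apply Rabs_pos. apply pos_INR. Qed.
Lemma C2c_nonneg : 0 <= C2c.
Proof. apply cond_pos_sum; intros; apply Rmult_le_pos. apply Rabs_pos. apply pow_le, pos_INR. Qed.

Lemma Pp_bound a : 0 <= a <= 1 -> Rabs (Pp a) <= CPc * a.
Proof.
  intros Ha. unfold Pp, CPc. eapply Rle_trans. apply sum_f_R0_triangle.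
  rewrite Rmult_comm, scal_sum. apply sum_Rle. intros i _. rewrite Rabs_mult.
  apply Rmult_le_compat_l. apply Rabs_pos.
  rewrite Rabs_right by (apply Rle_ge, pow_le; lra). simpl.
  pose proof (pow_le1 a i Ha). pose proof (pow_le a i (proj1 Ha)). nra.
Qed.

Lemma Mp_bound a : 0 <= a <= 1 -> Rabs (Mp a) <= CMc.
Proof.
  intros Ha. unfold Mp, CMc. eapply Rle_trans. apply sum_f_R0_triangle.
  apply sum_Rle. intros i _. rewrite !Rabs_mult.
  rewrite (Rabs_right (INR (S i))) by (apply Rle_ge, pos_INR).
  rewrite (Rabs_right (a ^ i)) by (apply Rle_ge, pow_le; lra).
  pose proof (pow_le1 a i Ha). pose proof (pow_le a i (proj1 Ha)).
  pose proof (Rabs_pos (c i)). pose proof (pos_INR (S i)).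
  rewrite <- (Rmult_1_r (Rabs (c i) * INR (S i))) at 2. apply Rmult_le_compat_l; auto.
  apply Rmult_le_pos; auto.
Qed.

Lemma sum_lin3 (f g h : nat -> R) (k : R) n :
  sum_f_R0 f n - sum_f_R0 g n - sum_f_R0 h n * k = sum_f_R0 (fun i => f i - g i - h i * k) n.
Proof. induction n; simpl. ring. rewrite <- IHn. ring. Qed.

Lemma Delta_bound u a : 0 <= u <= 1 -> 0 <= a <= 1 ->
  Rabs (Pp u - Pp a - Mp a * (u - a)) <= C2c * (u - a) ^ 2.
Proof.
  intros Hu Ha. unfold Pp, Mp. rewrite sum_lin3.
  eapply Rle_trans. apply sum_f_R0_triangle. unfold C2c. rewrite Rmult_comm, scal_sum.
  apply sum_Rle. intros i _.
  replace (c i * u ^ S i - c i * a ^ S i - c i * INR (S i) * a ^ i * (u - a))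
    with (c i * (u ^ S i - a ^ S i - INR (S i) * a ^ i * (u - a))) by ring.
  rewrite Rabs_mult.
  replace (Rabs (c i) * INR (S i) ^ 2 * (u - a) ^ 2) with (Rabs (c i) * (INR (S i) ^ 2 * (u - a) ^ 2)) by ring.
  apply Rmult_le_compat_l. apply Rabs_pos.
  apply Tpow_bound; auto.
Qed.

Lemma local_est (a u s g e1 Hh : R) :
  0 <= a <= 1 -> 0 <= u <= 1 -> 0 <= s -> 0 <= g -> 0 <= e1 ->
  Rabs ((a - u) - s * a) <= g * a -> Rabs (a - u) <= (s + g) * a ->
  Rabs (Hh - 1 - s * a * Mp a) <= e1 * a ->
  Rabs (exp (Pp u) * Hh - exp (Pp a)) <= delta_loc s g e1 * a.
Proof.
  intros Ha Hu Hs Hg He1 Hd1 Hd2 HH.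
  pose proof CPc_nonneg. pose proof CMc_nonneg. pose proof C2c_nonneg.
  set (d := a - u) in *. set (D := Pp u - Pp a).
  assert (HE2 : Rabs (D + Mp a * d) <= C2c * d ^ 2).
  { replace (D + Mp a * d) with (Pp u - Pp a - Mp a * (u - a)) by (unfold D, d; ring).
    replace (d ^ 2) with ((u - a) ^ 2) by (unfold d; ring). apply Delta_bound; auto. }
  assert (Hd1' : Rabs d <= 1) by (unfold d; apply Rabs_le; lra).
  assert (Hdd : d ^ 2 <= Rabs d) by (rewrite <- pow2_abs; pose proof (Rabs_pos d); simpl; nra).
  assert (HM := Mp_bound a Ha).
  assert (HMd : Rabs (Mp a * d) <= CMc * Rabs d).
  { rewrite Rabs_mult. apply Rmult_le_compat_r. apply Rabs_pos. auto. }
  assert (HD : Rabs D <= CDc * Rabs d).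
  { unfold CDc. replace D with ((D + Mp a * d) - Mp a * d) by ring.
    eapply Rle_trans. apply Rabs_triang. rewrite Rabs_Ropp.
    assert (C2c * d ^ 2 <= C2c * Rabs d) by (apply Rmult_le_compat_l; auto). lra. }
  assert (HCD : 0 <= CDc) by (unfold CDc; lra).
  assert (HD1 : Rabs D <= CDc).
  { eapply Rle_trans. apply HD. rewrite <- (Rmult_1_r CDc) at 2. apply Rmult_le_compat_l; auto. }
  assert (HD2 : Rabs D <= CDc * ((s + g) * a)).
  { eapply Rle_trans. apply HD. apply Rmult_le_compat_l; auto. }
  assert (HeD : exp (Rabs D) <= exp CDc) by (apply exp_le_mono; auto).
  assert (Hsg : 0 <= s + g) by lra.
  assert (Hd2sq : d ^ 2 <= (s + g) ^ 2 * a).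
  { rewrite <- pow2_abs. assert (Rabs d ^ 2 <= ((s + g) * a) ^ 2).
    { apply pow_incr. split. apply Rabs_pos. auto. }
    rewrite Rpow_mult_distr in H2. assert (a ^ 2 <= a) by (simpl; nra).
    assert ((s + g) ^ 2 * a ^ 2 <= (s + g) ^ 2 * a) by (apply Rmult_le_compat_l; auto; apply pow2_ge_0). lra. }
  assert (HsaM : Rabs (s * a * Mp a) <= s * CMc).
  { rewrite !Rabs_mult. rewrite (Rabs_right s), (Rabs_right a) by lra.
    assert (s * a <= s) by nra. pose proof (Rabs_pos (Mp a)).
    apply Rle_trans with (s * a * CMc). apply Rmult_le_compat_l; nra. apply Rmult_le_compat_r; nra. }
  assert (HH1 : Rabs (Hh - 1) <= s * CMc + e1).
  { replace (Hh - 1) with ((Hh - 1 - s * a * Mp a) + s * a * Mp a) by ring.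
    eapply Rle_trans. apply Rabs_triang. assert (e1 * a <= e1) by nra. lra. }
  set (X := exp D).
  assert (HPu : exp (Pp u) = exp (Pp a) * X) by (unfold X, D; rewrite <- exp_plus; f_equal; ring).
  rewrite HPu.
  replace (exp (Pp a) * X * Hh - exp (Pp a)) with (exp (Pp a) * (X * Hh - 1)) by ring.
  rewrite Rabs_mult. rewrite (Rabs_right (exp (Pp a))) by (apply Rle_ge, Rlt_le, exp_pos).
  assert (HPa : exp (Pp a) <= exp CPc).
  { apply exp_le_mono. pose proof (Pp_bound a Ha). pose proof (Rle_abs (Pp a)).
    assert (CPc * a <= CPc) by nra. lra. }
  unfold delta_loc. rewrite Rmult_assoc.
  apply Rmult_le_compat. apply Rlt_le, exp_pos. apply Rabs_pos. auto.
  replace (X * Hh - 1) with ((X - 1) * (Hh - 1) + (X - 1 - D) + (D + s * a * Mp a) + (Hh - 1 - s * a * Mp a)) by ring.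
  assert (T1 : Rabs ((X - 1) * (Hh - 1)) <= CDc * exp CDc * (s + g) * (s * CMc + e1) * a).
  { rewrite Rabs_mult. pose proof (exp_m1_bound D) as HX. fold X in HX.
    assert (Rabs (X - 1) <= CDc * ((s + g) * a) * exp CDc).
    { eapply Rle_trans. apply HX. apply Rmult_le_compat; auto. apply Rabs_pos. apply Rlt_le, exp_pos. }
    replace (CDc * exp CDc * (s + g) * (s * CMc + e1) * a) with ((CDc * ((s + g) * a) * exp CDc) * (s * CMc + e1)) by ring.
    apply Rmult_le_compat; auto; apply Rabs_pos. }
  assert (T2 : Rabs (X - 1 - D) <= CDc ^ 2 * exp CDc * (s + g) ^ 2 * a).
  { pose proof (exp_m1y_bound D) as HX. fold X in HX. eapply Rle_trans. apply HX.
    assert (D ^ 2 <= CDc ^ 2 * (s + g) ^ 2 * a).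
    { rewrite <- pow2_abs. apply Rle_trans with ((CDc * Rabs d) ^ 2).
      apply pow_incr. split. apply Rabs_pos. auto.
      rewrite Rpow_mult_distr, pow2_abs. rewrite Rmult_assoc. apply Rmult_le_compat_l. apply pow2_ge_0. auto. }
    replace (CDc ^ 2 * exp CDc * (s + g) ^ 2 * a) with ((CDc ^ 2 * (s + g) ^ 2 * a) * exp CDc) by ring.
    apply Rmult_le_compat; auto. apply pow2_ge_0. apply Rlt_le, exp_pos. }
  assert (T3 : Rabs (D + s * a * Mp a) <= CMc * g * a + C2c * (s + g) ^ 2 * a).
  { replace (D + s * a * Mp a) with ((D + Mp a * d) - (d - s * a) * Mp a) by ring.
    eapply Rle_trans. apply Rabs_triang. rewrite Rabs_Ropp, Rabs_mult.
    assert (Rabs (d - s * a) * Rabs (Mp a) <= (g * a) * CMc) by (apply Rmult_le_compat; auto; apply Rabs_pos).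
    assert (C2c * d ^ 2 <= C2c * ((s + g) ^ 2 * a)) by (apply Rmult_le_compat_l; auto). lra. }
  eapply Rle_trans. apply Rabs_triang. eapply Rle_trans. apply Rplus_le_compat_r. apply Rabs_triang.
  eapply Rle_trans. apply Rplus_le_compat_r. apply Rplus_le_compat_r. apply Rabs_triang.
  lra.
Qed.

End Loc.

Lemma delta_loc_nonneg c N s g e1 : 0 <= s -> 0 <= g -> 0 <= e1 -> 0 <= delta_loc c N s g e1.
Proof.
  intros. unfold delta_loc. pose proof (CPc_nonneg c N). pose proof (CMc_nonneg c N). pose proof (C2c_nonneg c N).
  assert (0 <= CDc c N) by (unfold CDc; lra).
  pose proof (exp_pos (CDc c N)). pose proof (exp_pos (CPc c N)).
  apply Rmult_le_pos. lra.
  repeat apply Rplus_le_le_0_compat; repeat apply Rmult_le_pos; try lra; try (apply pow_le; lra); nra.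
Qed.

Lemma rec_to_0 (B r dl : nat -> R) :
  (forall n, 0 <= B n) -> (forall n, B (S n) <= r (S n) * B n + dl (S n)) ->
  (forall n, 0 <= r (S n) < 1) ->
  (forall e, e > 0 -> exists N0, forall n, (n >= N0)%nat -> dl (S n) <= e * (1 - r (S n))) ->
  (forall M, exists N, M < sum_f_R0 (fun i => 1 - r (S i)) N) -> Un_cv B 0.
Proof.
  intros HB Hrec Hr Hdl Hdiv e He.
  destruct (Hdl (e / 2) ltac:(lra)) as [K0 HK0].
  set (T := fun k => sum_f_R0 (fun i => 1 - r (S i)) k).
  set (Z := fun k => B (S k) - e / 2).
  assert (HZ : forall k, (k >= K0)%nat -> Z (S k) <= r (S (S k)) * Z k).
  { intros k Hk. unfold Z. specialize (Hrec (S k)). specialize (HK0 (S k) ltac:(lia)). lra. }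
  set (C := Rmax (Z K0) 0 * exp (T K0)).
  assert (HC : 0 <= C) by (unfold C; apply Rmult_le_pos; [apply Rmax_r | apply Rlt_le, exp_pos]).
  assert (HZb : forall k, (k >= K0)%nat -> Z k <= C * exp (- T k)).
  { intros k Hk. induction Hk.
    - unfold C. rewrite Rmult_assoc, <- exp_plus. replace (T K0 + - T K0) with 0 by ring.
      rewrite exp_0, Rmult_1_r. apply Rmax_l.
    - eapply Rle_trans. apply HZ; lia.
      specialize (Hr (S m)). pose proof (exp_ineq1_le (r (S (S m)) - 1)).
      assert (HT : T (S m) = T m + (1 - r (S (S m)))) by (unfold T; simpl; auto).
      rewrite HT. replace (- (T m + (1 - r (S (S m))))) with (- T m + (r (S (S m)) - 1)) by ring.
      rewrite exp_plus. pose proof (exp_pos (- T m)).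
      assert (0 <= C * exp (- T m)) by (apply Rmult_le_pos; lra).
      apply Rle_trans with (r (S (S m)) * (C * exp (- T m))).
      apply Rmult_le_compat_l; lra.
      replace (C * (exp (- T m) * exp (r (S (S m)) - 1))) with ((C * exp (- T m)) * exp (r (S (S m)) - 1)) by ring.
      rewrite Rmult_comm. apply Rmult_le_compat_l; lra. }
  destruct (Hdiv (C / (e / 4))) as [K1 HK1].
  exists (S (K0 + K1)). intros n Hn. destruct n as [|k]. lia.
  assert (Tmono : forall a b, (a <= b)%nat -> T a <= T b).
  { intros a b Hab. induction Hab. lra. unfold T in *; simpl. specialize (Hr (S m)). lra. }
  assert (HTk : C / (e / 4) < T k) by (eapply Rlt_le_trans; [apply HK1 | apply Tmono; lia]).
  assert (HCexp : C * exp (- T k) <= e / 4).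
  { pose proof (exp_ineq1_le (T k)). pose proof (exp_pos (T k)).
    rewrite exp_Ropp. 
    assert (0 < T k). { apply Rle_lt_trans with (C / (e/4)); auto. apply Rmult_le_pos; auto. apply Rlt_le, Rinv_0_lt_compat; lra. }
    apply Rmult_le_reg_r with (exp (T k)); auto. rewrite Rmult_assoc, Rinv_l by lra.
    assert (C < e / 4 * T k).
    { apply Rmult_lt_reg_r with (/ (e / 4)). apply Rinv_0_lt_compat; lra.
      replace (e / 4 * T k * / (e / 4)) with (T k) by (field; lra). auto. }
    assert (e / 4 * T k <= e / 4 * exp (T k)) by (apply Rmult_le_compat_l; lra). lra. }
  specialize (HZb k ltac:(lia)). unfold Z in HZb. specialize (HB (S k)).
  unfold Rdist. rewrite Rminus_0_r, Rabs_right by lra. lra.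
Qed.

Fixpoint Spart (a : nat -> R) (k : nat) : R :=
  match k with O => 0 | S k' => Spart a k' + a k' end.

Lemma Spart_sum a K : Spart a (S K) = sum_f_R0 a K.
Proof. induction K. simpl; ring. change (Spart a (S (S K))) with (Spart a (S K) + a (S K)). rewrite IHK. simpl; auto. Qed.

Lemma Spart_cv (u : nat -> nat -> R) (l : nat -> R) (k : nat) :
  (forall j, (j < k)%nat -> Un_cv (fun n => u n j) (l j)) ->
  Un_cv (fun n => Spart (u n) k) (Spart l k).
Proof.
  induction k; intros H; simpl. apply cv_const. apply CV_plus. apply IHk; intros; apply H; lia. apply H; lia.
Qed.

Lemma Spart_le (a b : nat -> R) k : (forall j, a j <= b j) -> Spart a k <= Spart b k.
Proof. intros H; induction k; simpl. lra. specialize (H k). lra. Qed.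

Lemma Spart_mono (a : nat -> R) k m : (forall j, 0 <= a j) -> (k <= m)%nat -> Spart a k <= Spart a m.
Proof. intros H Hkm; induction Hkm. lra. simpl. specialize (H m). lra. Qed.

Lemma geom_IS (x : R) : 0 <= x < 1 -> infinite_sum (fun k => x ^ k) (/ (1 - x)).
Proof.
  intros Hx. pose proof (GP_infinite x ltac:(rewrite Rabs_right; lra)) as H. unfold Pser in H.
  revert H. apply IS_ext. intros; ring.
Qed.

Lemma tail_bound (a : nat -> R) (f x : R) (k : nat) :
  0 <= x < 1 -> (forall j, 0 <= a j <= 1) -> infinite_sum (fun j => a j * x ^ j) f ->
  0 <= f - Spart (fun j => a j * x ^ j) k <= x ^ k / (1 - x).
Proof.
  intros Hx Ha Hf.
  assert (Hpos : forall j, 0 <= a j * x ^ j) by (intros j; apply Rmult_le_pos; [apply Ha | apply pow_le; lra]).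
  destruct k as [|k].
  - simpl. rewrite Rminus_0_r. split. apply (IS_nonneg _ _ Hpos Hf).
    replace (1 / (1 - x)) with (/ (1 - x)) by (field; lra).
    refine (IS_le _ _ _ _ _ Hf (geom_IS x Hx)). intros j.
    pose proof (pow_le x j (proj1 Hx)). specialize (Ha j). nra.
  - rewrite Spart_sum. split.
    + pose proof (IS_partial_le _ _ k Hpos Hf). lra.
    + assert (Hd := IS_minus _ _ _ _ (geom_IS x Hx) Hf).
      assert (Hdp : forall j, 0 <= x ^ j - a j * x ^ j).
      { intros j. pose proof (pow_le x j (proj1 Hx)). specialize (Ha j). nra. }
      pose proof (IS_partial_le _ _ k Hdp Hd).
      assert (E : sum_f_R0 (fun j => x ^ j - a j * x ^ j) k = sum_f_R0 (fun j => x ^ j) k - sum_f_R0 (fun j => a j * x ^ j) k).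
      { induction k; simpl. ring. rewrite IHk. ring.
        apply (IS_partial_le _ _ k Hdp Hd). }
      rewrite E in H. rewrite tech3 in H by lra.
      replace (x ^ S k / (1 - x)) with (/ (1 - x) - (1 - x ^ S k) / (1 - x)) by (field; lra). lra.
Qed.

Lemma pow_le1' (y : R) (k : nat) : 0 <= y <= 1 -> y ^ k <= 1.
Proof. intros H. induction k; simpl. lra. pose proof (pow_le y k (proj1 H)). nra. Qed.

Section Extract.
Variables (L : nat -> nat -> R) (f : nat -> R -> R) (F : R -> R) (B0 : R).
Hypothesis HLpos : forall n k, 0 <= L n k.
Hypothesis Hf : forall n x, 0 <= x <= 1 -> infinite_sum (fun k => L n k * x ^ k) (f n x).
Hypothesis Hf1 : forall n, f n 1 = 1.
Hypothesis Hcv : forall x, 0 <= x <= 1 -> Un_cv (fun n => f n x) (F x).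
Hypothesis HB0 : 0 <= B0.
Hypothesis HF1 : forall x, 0 <= x <= 1 -> Rabs (1 - F x) <= B0 * (1 - x).

Lemma L_le1 n k : L n k <= 1.
Proof.
  rewrite <- (Hf1 n). specialize (Hf n 1 ltac:(lra)).
  pose proof (IS_term_le _ _ k (fun j => Rmult_le_pos _ _ (HLpos n j) (pow_le 1 j ltac:(lra))) Hf).
  cbv beta in H. rewrite pow1, Rmult_1_r in H. auto.
Qed.

Lemma L_bounds n : forall j, 0 <= L n j <= 1.
Proof. intros j; split; [apply HLpos | apply L_le1]. Qed.

Definition plim (k : nat) : R := epsilon (inhabits 0) (fun l => Un_cv (fun n => L n k) l).

Lemma plim_spec k : (exists l, Un_cv (fun n => L n k) l) -> Un_cv (fun n => L n k) (plim k).
Proof. intros H. unfold plim. apply (epsilon_spec (inhabits 0) (fun l => Un_cv (fun n => L n k) l)). auto. Qed.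

Lemma cauchy_step k : (forall j, (j < k)%nat -> Un_cv (fun n => L n j) (plim j)) ->
  exists l, Un_cv (fun n => L n k) l.
Proof.
  intros Hprev.
  destruct (Rcomplete.R_complete (fun n => L n k)) as [l Hl]; [| exists l; exact Hl].
  intros e He.
  set (x := e / (e + 8)).
  assert (Hx : 0 < x < 1).
  { unfold x; split. apply Rdiv_lt_0_compat; lra.
    apply Rmult_lt_reg_r with (e + 8). lra. unfold Rdiv; rewrite Rmult_assoc, Rinv_l; lra. }
  assert (Hxr : x / (1 - x) = e / 8) by (unfold x; field; lra).
  assert (Hxk : 0 < x ^ k) by (apply pow_lt; lra).
  set (V := fun n => (f n x - Spart (fun j => L n j * x ^ j) k) / x ^ k).
  set (Vl := (F x - Spart (fun j => plim j * x ^ j) k) / x ^ k).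
  assert (HV : Un_cv V Vl).
  { unfold V, Vl. unfold Rdiv. apply CV_mult; [| apply cv_const]. apply CV_minus. apply Hcv; lra.
    apply (Spart_cv (fun n j => L n j * x ^ j)). intros j Hj.
    apply (cv_ext (fun n => x ^ j * L n j)). intros; ring. rewrite Rmult_comm. apply cv_scal. auto. }
  assert (HVb : forall n, L n k <= V n <= L n k + e / 8).
  { intros n. pose proof (tail_bound (L n) (f n x) x (S k) ltac:(lra) (L_bounds n) (Hf n x ltac:(lra))) as T.
    simpl Spart in T. unfold V. rewrite <- Hxr.
    split.
    - apply Rmult_le_reg_r with (x ^ k); auto. unfold Rdiv; rewrite Rmult_assoc, Rinv_l by lra. lra.
    - apply Rmult_le_reg_r with (x ^ k); auto. unfold Rdiv; rewrite Rmult_assoc, Rinv_l by lra.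
      replace ((L n k + x * / (1 - x)) * x ^ k) with (L n k * x ^ k + x ^ S k / (1 - x)) by (simpl; field; lra).
      lra. }
  destruct (HV (e / 4) ltac:(lra)) as [N HN].
  exists N. intros n m Hn Hm. specialize (HN n Hn) as H1. specialize (HN m Hm) as H2.
  unfold Rdist in *. apply Rabs_def2 in H1. apply Rabs_def2 in H2.
  pose proof (HVb n). pose proof (HVb m). apply Rabs_def1; lra.
Qed.

Lemma plim_cv k : Un_cv (fun n => L n k) (plim k).
Proof.
  assert (H : forall K k, (k <= K)%nat -> Un_cv (fun n => L n k) (plim k)).
  { induction K; intros k0 Hk.
    - apply plim_spec. apply cauchy_step. intros; lia.
    - destruct (Nat.lt_ge_cases k0 (S K)) as [Hlt | Heq]. apply IHK; lia.
      assert (k0 = S K) by lia. subst k0. apply plim_spec. apply cauchy_step. intros j Hj. apply IHK; lia. }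
  apply (H k k). lia.
Qed.

Lemma plim_nonneg k : 0 <= plim k.
Proof. apply (cv_le_loc (fun _ => 0) (fun n => L n k) _ _ 0). intros; auto. apply cv_const. apply plim_cv. Qed.

Lemma plim_tail x K : 0 <= x < 1 ->
  0 <= F x - Spart (fun j => plim j * x ^ j) K <= x ^ K / (1 - x).
Proof.
  intros Hx.
  assert (Hc : Un_cv (fun n => f n x - Spart (fun j => L n j * x ^ j) K) (F x - Spart (fun j => plim j * x ^ j) K)).
  { apply CV_minus. apply Hcv; lra. apply (Spart_cv (fun n j => L n j * x ^ j)). intros j _.
    apply (cv_ext (fun n => x ^ j * L n j)). intros; ring. rewrite Rmult_comm. apply cv_scal. apply plim_cv. }
  pose proof (fun n => tail_bound (L n) (f n x) x K Hx (L_bounds n) (Hf n x ltac:(lra))) as T.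
  split.
  - apply (cv_le_loc (fun _ => 0) (fun n => f n x - Spart (fun j => L n j * x ^ j) K) _ _ 0).
    intros n _; apply T. apply cv_const. auto.
  - apply (cv_le_loc (fun n => f n x - Spart (fun j => L n j * x ^ j) K) (fun _ => x ^ K / (1 - x)) _ _ 0).
    intros n _; apply T. auto. apply cv_const.
Qed.

Lemma plim_gf x : 0 <= x < 1 -> infinite_sum (fun k => plim k * x ^ k) (F x).
Proof.
  intros Hx e He.
  destruct (pow_lt_1_zero x ltac:(rewrite Rabs_right; lra) (e * (1 - x)) ltac:(apply Rmult_lt_0_compat; lra)) as [N HN].
  exists N. intros n Hn. specialize (HN (S n) ltac:(lia)).
  pose proof (plim_tail x (S n) Hx) as T. rewrite Spart_sum in T.
  rewrite Rabs_right in HN by (apply Rle_ge, pow_le; lra).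
  assert (x ^ S n / (1 - x) < e).
  { apply Rmult_lt_reg_r with (1 - x). lra. unfold Rdiv; rewrite Rmult_assoc, Rinv_l by lra. lra. }
  unfold Rdist. rewrite Rabs_minus_sym. rewrite Rabs_right by lra. lra.
Qed.

Lemma F_1 : F 1 = 1.
Proof. pose proof (HF1 1 ltac:(lra)). replace (B0 * (1 - 1)) with 0 in H by ring.
  apply Rabs_le_inv in H. lra. Qed.

Lemma plim_sum1 : infinite_sum plim 1.
Proof.
  intros e He.
  assert (Hup : forall K, Spart plim K <= 1).
  { intros K. apply (cv_le_loc (fun n => Spart (L n) K) (fun _ => 1) _ _ 0).
    2: apply (Spart_cv L plim K); intros; apply plim_cv. 2: apply cv_const.
    intros n _. specialize (Hf n 1 ltac:(lra)). rewrite Hf1 in Hf.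
    destruct K. simpl; lra. rewrite Spart_sum.
    pose proof (IS_partial_le _ _ K (fun j => Rmult_le_pos _ _ (HLpos n j) (pow_le 1 j ltac:(lra))) Hf).
    replace (sum_f_R0 (L n) K) with (sum_f_R0 (fun k => L n k * 1 ^ k) K). lra.
    apply sum_eq; intros; rewrite pow1; ring. }
  set (dx := Rmin (e / (2 * (B0 + 1))) (1 / 2)).
  assert (Hdx : 0 < dx <= 1/2).
  { unfold dx. split. apply Rmin_pos. apply Rdiv_lt_0_compat; lra. lra. apply Rmin_r. }
  set (x := 1 - dx).
  assert (Hx : 0 <= x < 1) by (unfold x; lra).
  assert (HFx : 1 - e / 2 <= F x).
  { pose proof (HF1 x ltac:(lra)). apply Rabs_le_inv in H.
    assert (B0 * dx <= e / 2).
    { apply Rle_trans with ((B0 + 1) * (e / (2 * (B0 + 1)))).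
      apply Rmult_le_compat; try lra. apply Rmin_l. right; field; lra. }
    assert (1 - x = dx) by (unfold x; ring). rewrite H1 in H. lra. }
  destruct (pow_lt_1_zero x ltac:(rewrite Rabs_right; lra) (e / 2 * (1 - x)) ltac:(apply Rmult_lt_0_compat; lra)) as [N HN].
  exists N. intros n Hn. specialize (HN (S n) ltac:(lia)).
  rewrite Rabs_right in HN by (apply Rle_ge, pow_le; lra).
  pose proof (plim_tail x (S n) Hx) as T.
  assert (x ^ S n / (1 - x) < e / 2).
  { apply Rmult_lt_reg_r with (1 - x). lra. unfold Rdiv; rewrite Rmult_assoc, Rinv_l by lra. lra. }
  assert (Spart (fun j => plim j * x ^ j) (S n) <= Spart plim (S n)).
  { apply Spart_le. intros j. pose proof (plim_nonneg j). pose proof (pow_le1' x j).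
    assert (x ^ j <= 1) by (apply pow_le1'; lra). 
    assert (plim j * x ^ j <= plim j * 1) by (apply Rmult_le_compat_l; lra). lra. }
  specialize (Hup (S n)). rewrite Spart_sum in *.
  rewrite Spart_sum in H0. unfold Rdist. rewrite Rabs_left1 by lra. lra.
Qed.

End Extract.

Lemma binom_key (x : R) (n : nat) :
  sum_f_R0 (fun i => / INR (fact (S i)) * ((-1) ^ (n - i) / INR (fact (n - i))) * (x ^ S i - 1)) n
  = (x - 1) ^ S n / INR (fact (S n)).
Proof.
  assert (H1 := binomial x (-1) (S n)).
  assert (H0 := binomial 1 (-1) (S n)).
  rewrite decomp_sum in H1 by lia. rewrite decomp_sum in H0 by lia. simpl pred in H0, H1.
  replace (x + -1) with (x - 1) in H1 by ring.
  replace (1 + -1) with 0 in H0 by ring. rewrite pow_i in H0 by lia.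
  assert (E : (x - 1) ^ S n = (x - 1) ^ S n - 0) by ring.
  rewrite E, H1, H0. clear E H0 H1.
  assert (HC : forall i, (i <= n)%nat ->
     Binomial.C (S n) (S i) = INR (fact (S n)) * (/ INR (fact (S i)) * / INR (fact (n - i)))).
  { intros i Hi. unfold Binomial.C. replace (S n - S i)%nat with (n - i)%nat by lia.
    pose proof (INR_fact_lt_0 (S i)). pose proof (INR_fact_lt_0 (n - i)). field. lra. }
  replace (Binomial.C (S n) 0 * x ^ 0 * (-1) ^ (S n - 0) +
      sum_f_R0 (fun i : nat => Binomial.C (S n) (S i) * x ^ S i * (-1) ^ (S n - S i)) n -
     (Binomial.C (S n) 0 * 1 ^ 0 * (-1) ^ (S n - 0) +
      sum_f_R0 (fun i : nat => Binomial.C (S n) (S i) * 1 ^ S i * (-1) ^ (S n - S i)) n))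
   with (sum_f_R0 (fun i : nat => Binomial.C (S n) (S i) * x ^ S i * (-1) ^ (S n - S i)) n -
         sum_f_R0 (fun i : nat => Binomial.C (S n) (S i) * 1 ^ S i * (-1) ^ (S n - S i)) n) by ring.
  rewrite <- minus_sum. unfold Rdiv. rewrite Rmult_comm, scal_sum. apply sum_eq. intros i Hi.
  rewrite HC by auto. rewrite pow1. replace (S n - S i)%nat with (n - i)%nat by lia.
  pose proof (INR_fact_lt_0 (S n)). pose proof (INR_fact_lt_0 (S i)). pose proof (INR_fact_lt_0 (n - i)).
  field. repeat split; lra.
Qed.

Lemma sum0 (f : nat -> R) : sum_f_R0 f 0 = f 0%nat.
Proof. reflexivity. Qed.

Lemma A_identity (lam : nat -> R) (x : R) (N : nat) :
  sum_f_R0 (fun i => / INR (fact (S i)) *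
     sum_f_R0 (fun i' => (-1) ^ i' / INR (fact i') * lam (S i + i')%nat) (N - i) * (x ^ S i - 1)) N
  = sum_f_R0 (fun j => lam (S j) * (x - 1) ^ S j / INR (fact (S j))) N.
Proof.
  induction N.
  - simpl. field.
  - set (g := fun i => / INR (fact (S i)) * ((-1) ^ (S N - i) / INR (fact (S N - i))) * (x ^ S i - 1)).
    assert (Hsplit : sum_f_R0 (fun i => / INR (fact (S i)) *
       sum_f_R0 (fun i' => (-1) ^ i' / INR (fact i') * lam (S i + i')%nat) (S N - i) * (x ^ S i - 1)) (S N)
       = sum_f_R0 (fun i => / INR (fact (S i)) *
       sum_f_R0 (fun i' => (-1) ^ i' / INR (fact i') * lam (S i + i')%nat) (N - i) * (x ^ S i - 1)) N
         + lam (S (S N)) * sum_f_R0 g (S N)).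
    { rewrite (tech5 _ N). rewrite (tech5 g N).
      rewrite Nat.sub_diag. rewrite sum0.
      rewrite Rmult_plus_distr_l. rewrite scal_sum. rewrite <- Rplus_assoc. rewrite <- sum_plus.
      f_equal. apply sum_eq. intros i Hi. replace (S N - i)%nat with (S (N - i)) by lia.
      rewrite tech5. unfold g. replace (S N - i)%nat with (S (N - i)) by lia.
      replace (S i + S (N - i))%nat with (S (S N)) by lia. unfold Rdiv. ring.
      unfold g. rewrite Nat.sub_diag. replace (S (S N) + 0)%nat with (S (S N)) by lia. unfold Rdiv. ring. }
    rewrite Hsplit, IHN. unfold g. rewrite binom_key. rewrite (tech5 _ N). unfold Rdiv. ring.
Qed.

Lemma msum_split (mm : nat -> R) (t : R) (N : nat) :
  msum mm t (S (S N)) = mm 0%nat + sum_f_R0 (fun i => mm (S i) / INR (fact (S i)) * t ^ S i) N.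
Proof.
  induction N.
  - simpl. field.
  - change (msum mm t (S (S (S N)))) with (msum mm t (S (S N)) + mm (S (S N)) / INR (fact (S (S N))) * t ^ (S (S N))).
    rewrite IHN, tech5. unfold Rdiv. ring.
Qed.

Lemma fm_nonneg (p : nat -> R) j v : is_pmf p -> fact_moment p j v -> 0 <= v.
Proof. intros [Hp _] H. apply (IS_nonneg _ _ (fun k => Rmult_le_pos _ _ (fall_nonneg k j) (Hp k)) H). Qed.

Lemma fm0 (p : nat -> R) : is_pmf p -> fact_moment p 0 1.
Proof. intros [_ Hs]. unfold fact_moment. revert Hs. apply IS_ext. intros; simpl; ring. Qed.

Definition cco (lam : nat -> R) (i : nat) : R := lam (S i) * (-1) ^ (S i) / INR (fact (S i)).

Lemma step_est (N : nat) (lam : nat -> R) (px pe : nat -> R) (rh g2v : R) (mm : nat -> R) (x : R) :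
  is_pmf px -> is_pmf pe -> fact_moment px 1 rh -> fact_moment px 2 g2v ->
  (forall j, (1 <= j <= S (S N))%nat -> fact_moment pe j (mm j)) -> rh < 1 -> 0 <= x <= 1 ->
  Rabs (exp (Pp (cco lam) N (1 - pgf px x)) * pgf pe x - exp (Pp (cco lam) N (1 - x)))
  <= delta_loc (cco lam) N (1 - rh) (g2v / 2)
       ((1 - rh) * sum_f_R0 (fun i => Rabs (mm (S i) / (INR (S i) * (1 - rh)) - lam (S i)) * INR (S i)) N
        + mm (S (S N)) / INR (fact (S (S N)))) * (1 - x).
Proof.
  intros Px Pe Hrh Hg2 Hm Hrh1 Hx.
  destruct (pmf_pgf px x Px Hx) as [_ HGb]. destruct (pmf_pgf pe x Pe Hx) as [_ HHb].
  set (G := pgf px x) in *. set (He := pgf pe x) in *.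
  set (s := 1 - rh). set (a := 1 - x).
  assert (Hs : 0 < s) by (unfold s; lra).
  assert (Hg2n : 0 <= g2v) by (apply (fm_nonneg px 2); auto).
  assert (HmJ : 0 <= mm (S (S N))) by (apply (fm_nonneg pe (S (S N))); auto; apply Hm; lia).
  assert (Hsum0 : 0 <= sum_f_R0 (fun i => Rabs (mm (S i) / (INR (S i) * s) - lam (S i)) * INR (S i)) N).
  { apply cond_pos_sum. intros; apply Rmult_le_pos. apply Rabs_pos. apply pos_INR. }
  assert (HfJ : 0 < INR (fact (S (S N)))) by apply INR_fact_lt_0.
  assert (Hxi : Rabs ((a - (1 - G)) - s * a) <= g2v / 2 * a).
  { set (mm2 := fun j => match j with 0 => 1 | 1 => rh | _ => g2v end).
    assert (T := pgf_taylor px mm2 x 2 Px Hx).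
    assert (T' : Rabs (G - msum mm2 (x - 1) 2) <= mm2 2%nat / INR (fact 2) * (1 - x) ^ 2).
    { apply T. intros j Hj. destruct j as [|[|[|j]]]; simpl mm2. apply fm0; auto. auto. auto. lia. }
    simpl mm2 in T'. simpl msum in T'. simpl fact in T'.
    replace ((a - (1 - G)) - s * a) with (G - (0 + 1 / INR 1 * 1 + rh / INR 1 * ((x - 1) * 1))) by (unfold a, s; simpl; field).
    eapply Rle_trans. apply T'. unfold a. simpl. 
    assert ((1 - x) * ((1 - x) * 1) <= 1 - x) by nra.
    assert (0 <= g2v / 2) by lra.
    replace (g2v / 2 * 1 * ((1 - x) * ((1 - x) * 1))) with (g2v / 2 * ((1 - x) * ((1 - x) * 1))) by ring.
    apply Rmult_le_compat_l; auto. }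
  assert (Heps : Rabs (He - 1 - s * a * Mp (cco lam) N a) <=
     (s * sum_f_R0 (fun i => Rabs (mm (S i) / (INR (S i) * s) - lam (S i)) * INR (S i)) N
      + mm (S (S N)) / INR (fact (S (S N)))) * a).
  { set (mm' := fun j => match j with 0 => 1 | _ => mm j end).
    assert (T := pgf_taylor pe mm' x (S (S N)) Pe Hx).
    assert (T' : Rabs (He - msum mm' (x - 1) (S (S N))) <= mm' (S (S N)) / INR (fact (S (S N))) * (1 - x) ^ (S (S N))).
    { apply T. intros j Hj. destruct j. apply fm0; auto. apply Hm. lia. }
    rewrite msum_split in T'. simpl mm' in T'.
    set (W := sum_f_R0 (fun i : nat => mm (S i) / INR (fact (S i)) * (x - 1) ^ S i) N) in T'.
    assert (HW : Rabs (W - s * a * Mp (cco lam) N a) <=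
              a * (s * sum_f_R0 (fun i => Rabs (mm (S i) / (INR (S i) * s) - lam (S i)) * INR (S i)) N)).
    { unfold W, Mp. rewrite scal_sum. rewrite <- minus_sum.
      eapply Rle_trans. apply sum_f_R0_triangle. rewrite scal_sum. rewrite scal_sum.
      apply sum_Rle. intros i Hi. simpl mm'.
      set (et := mm (S i) / (INR (S i) * s) - lam (S i)).
      assert (Emm : mm (S i) = INR (S i) * s * (et + lam (S i))).
      { unfold et. pose proof (pos_INR i). rewrite S_INR. field. split; lra. }
      replace (x - 1) with (-1 * a) by (unfold a; ring). rewrite Rpow_mult_distr.
      unfold cco. rewrite Emm.
      replace (INR (S i) * s * (et + lam (S i)) / INR (fact (S i)) * ((-1) ^ S i * a ^ S i) -
         lam (S i) * (-1) ^ S i / INR (fact (S i)) * INR (S i) * a ^ i * (s * a))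
        with ((-1) ^ S i * (a ^ i / INR (fact (S i))) * (a * s * et * INR (S i)))
        by (change (a ^ S i) with (a * a ^ i); field; apply INR_fact_neq_0).
      rewrite Rabs_mult, Rabs_mult, pow_1_abs, Rmult_1_l.
      assert (Hai : Rabs (a ^ i / INR (fact (S i))) <= 1).
      { pose proof (INR_fact_lt_0 (S i)). assert (1 <= INR (fact (S i))).
        { replace 1 with (INR 1) by reflexivity. apply le_INR. pose proof (lt_O_fact (S i)). lia. }
        rewrite Rabs_right. 2: { apply Rle_ge. apply Rmult_le_pos. apply pow_le; unfold a; lra. apply Rlt_le, Rinv_0_lt_compat; lra. }
        apply Rmult_le_reg_r with (INR (fact (S i))). lra. unfold Rdiv. rewrite Rmult_assoc, Rinv_l by lra.
        pose proof (pow_le1 a i ltac:(unfold a; lra)). lra. }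
      replace (Rabs et * INR (S i) * s * a) with (Rabs (a * s * et * INR (S i))).
      2: { rewrite !Rabs_mult. rewrite (Rabs_right a), (Rabs_right s), (Rabs_right (INR (S i))); try ring.
           apply Rle_ge, pos_INR. lra. unfold a; lra. }
      rewrite <- (Rmult_1_l (Rabs (a * s * et * INR (S i)))) at 2.
      apply Rmult_le_compat_r. apply Rabs_pos. auto. }
    replace (He - 1 - s * a * Mp (cco lam) N a) with ((He - (1 + W)) + (W - s * a * Mp (cco lam) N a)) by ring.
    eapply Rle_trans. apply Rabs_triang.
    assert ((1 - x) ^ S (S N) <= a).
    { unfold a. change ((1 - x) ^ S (S N)) with ((1 - x) * (1 - x) ^ (S N)).
      pose proof (pow_le1 (1 - x) (S N) ltac:(lra)).
      apply Rle_trans with ((1 - x) * 1); [apply Rmult_le_compat_l; lra | lra]. }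
    assert (mm (S (S N)) / INR (fact (S (S N))) * (1 - x) ^ S (S N) <= mm (S (S N)) / INR (fact (S (S N))) * a).
    { apply Rmult_le_compat_l; auto. apply Rmult_le_pos; auto. apply Rlt_le, Rinv_0_lt_compat; auto. }
    lra. }
  apply (local_est (cco lam) N a (1 - G) s (g2v / 2)); auto; try (unfold a; lra); try lra.
  - apply Rplus_le_le_0_compat. apply Rmult_le_pos; lra. apply Rmult_le_pos; auto. apply Rlt_le, Rinv_0_lt_compat; auto.
  - replace (a - (1 - G)) with ((a - (1 - G) - s * a) + s * a) by ring.
    eapply Rle_trans. apply Rabs_triang. rewrite (Rabs_right (s * a)) by (apply Rle_ge, Rmult_le_pos; unfold a; lra). lra.
Qed.

Lemma mu_Pp (N : nat) (lam : nat -> R) (x : R) :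
  sum_f_R0 (fun i => mu_of (S (S N)) lam (S i) * (x ^ S i - 1)) (S (S N) - 1 - 1) = Pp (cco lam) N (1 - x).
Proof.
  replace (S (S N) - 1 - 1)%nat with N by lia.
  transitivity (sum_f_R0 (fun i => / INR (fact (S i)) *
     sum_f_R0 (fun i' => (-1) ^ i' / INR (fact i') * lam (S i + i')%nat) (N - i) * (x ^ S i - 1)) N).
  { apply sum_eq. intros i Hi. unfold mu_of. replace (S (S N) - S i - 1)%nat with (N - i)%nat by lia. reflexivity. }
  rewrite A_identity. unfold Pp, cco. apply sum_eq. intros i _.
  replace (x - 1) with (-1 * (1 - x)) by ring. rewrite Rpow_mult_distr. unfold Rdiv. ring.
Qed.

Fixpoint Bseq (b0 : R) (r d : nat -> R) (n : nat) : R :=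
  match n with O => b0 | S n' => r (S n') * Bseq b0 r d n' + d (S n') end.

Lemma cv_sum0 (f : nat -> nat -> R) (K : nat) :
  (forall i, (i <= K)%nat -> Un_cv (fun n => f i n) 0) -> Un_cv (fun n => sum_f_R0 (fun i => f i n) K) 0.
Proof.
  induction K; intros H; simpl. apply H; lia.
  replace 0 with (0 + 0) by ring. apply CV_plus. apply IHK; intros; apply H; lia. apply H; lia.
Qed.

Theorem theorem3
  (J : nat) (HJ : (2 <= J)%nat)
  (xi eps : nat -> nat -> R)
  (rho g2 : nat -> R) (m : nat -> nat -> R) (lam : nat -> R)
  (L : nat -> nat -> R)
  (Hxi : forall n, (1 <= n)%nat -> is_pmf (xi n))
  (Heps : forall n, (1 <= n)%nat -> is_pmf (eps n))
  (Hrho : forall n, (1 <= n)%nat -> fact_moment (xi n) 1 (rho n))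
  (Hg2 : forall n, (1 <= n)%nat -> fact_moment (xi n) 2 (g2 n))
  (Hm : forall n j, (1 <= n)%nat -> (1 <= j <= J)%nat ->
          fact_moment (eps n) j (m n j))
  (Hrho1 : forall n, (1 <= n)%nat -> rho n < 1)
  (Hrholim : Un_cv rho 1)
  (Hdiv : forall M, exists N, M < sum_f_R0 (fun i => 1 - rho (S i)) N)
  (Hg2lim : Un_cv (fun n => g2 n / (1 - rho n)) 0)
  (Hlam : forall j, (1 <= j <= J)%nat ->
          Un_cv (fun n => m n j / (INR j * (1 - rho n))) (lam j))
  (HlamJ : lam J = 0)
  (HL : is_law_of_process xi eps L) :
  exists p, is_CP (J - 1) (mu_of J lam) p /\
    forall k, Un_cv (fun n => L n k) (p k).
Proof.
  destruct J as [|[|N]]; try lia.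
  set (c := cco lam).
  set (Fx := fun x => exp (Pp c N (1 - x))).
  set (e1 := fun n => (1 - rho n) * sum_f_R0 (fun i => Rabs (m n (S i) / (INR (S i) * (1 - rho n)) - lam (S i)) * INR (S i)) N
                      + m n (S (S N)) / INR (fact (S (S N)))).
  set (dl := fun n => delta_loc c N (1 - rho n) (g2 n / 2) (e1 n)).
  set (B0 := CPc c N * exp (CPc c N)).
  set (B := Bseq B0 rho dl).
  set (f := fpr xi eps).
  assert (HLP := law_pgf xi eps L Hxi Heps HL).
  assert (HCP := CPc_nonneg c N).
  assert (HB0 : 0 <= B0) by (unfold B0; apply Rmult_le_pos; [lra | apply Rlt_le, exp_pos]).
  assert (Hrho0 : forall n, 0 <= rho (S n)) by (intros n; apply (fm_nonneg (xi (S n)) 1); [apply Hxi | apply Hrho]; lia).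
  assert (Hdl0 : forall n, 0 <= dl (S n)).
  { intros n. unfold dl. assert (rho (S n) < 1) by (apply Hrho1; lia). apply delta_loc_nonneg. lra.
    assert (0 <= g2 (S n)) by (apply (fm_nonneg (xi (S n)) 2); [apply Hxi | apply Hg2]; lia). lra.
    unfold e1. apply Rplus_le_le_0_compat. apply Rmult_le_pos. lra. apply cond_pos_sum; intros; apply Rmult_le_pos.
    apply Rabs_pos. apply pos_INR. apply Rmult_le_pos. apply (fm_nonneg (eps (S n)) (S (S N))). apply Heps; lia. apply Hm; lia.
    apply Rlt_le, Rinv_0_lt_compat, INR_fact_lt_0. }
  assert (HBpos : forall n, 0 <= B n).
  { intros n. induction n. exact HB0. unfold B; simpl. fold B. specialize (Hrho0 n). specialize (Hdl0 n).
    apply Rplus_le_le_0_compat; auto. apply Rmult_le_pos; auto. }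
  assert (Hmain : forall n x, 0 <= x <= 1 -> Rabs (f n x - Fx x) <= B n * (1 - x)).
  { intros n. induction n; intros x Hx.
    - unfold f, Fx, B, B0; simpl. rewrite Rabs_minus_sym.
      eapply Rle_trans. apply exp_m1_bound. pose proof (Pp_bound c N (1 - x) ltac:(lra)).
      assert (exp (Rabs (Pp c N (1 - x))) <= exp (CPc c N)).
      { apply exp_le_mono. eapply Rle_trans. apply H. rewrite <- (Rmult_1_r (CPc c N)) at 2. apply Rmult_le_compat_l; lra. }
      replace (CPc c N * exp (CPc c N) * (1 - x)) with ((CPc c N * (1 - x)) * exp (CPc c N)) by ring.
      apply Rmult_le_compat; auto. apply Rabs_pos. apply Rlt_le, exp_pos.
    - assert (Px := Hxi (S n) ltac:(lia)). assert (Pe := Heps (S n) ltac:(lia)).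
      destruct (pmf_pgf _ x Px Hx) as [_ HGb]. destruct (pmf_pgf _ x Pe Hx) as [_ HHb].
      unfold f; simpl fpr. fold f.
      set (G := pgf (xi (S n)) x) in *. set (He := pgf (eps (S n)) x) in *.
      assert (HS := step_est N lam (xi (S n)) (eps (S n)) (rho (S n)) (g2 (S n)) (m (S n)) x Px Pe
                     (Hrho (S n) ltac:(lia)) (Hg2 (S n) ltac:(lia)) (fun j Hj => Hm (S n) j ltac:(lia) Hj)
                     (Hrho1 (S n) ltac:(lia)) Hx).
      fold G He c in HS. 
      assert (HGl : 1 + rho (S n) * (x - 1) <= G) by (apply pgf_lower; auto; apply Hrho; lia).
      specialize (IHn G HGb).
      replace (f n G * He - Fx x) with ((f n G - Fx G) * He + (Fx G * He - Fx x)) by ring.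
      eapply Rle_trans. apply Rabs_triang. rewrite Rabs_mult, (Rabs_right He) by lra.
      unfold B; simpl Bseq; fold B.
      assert (Rabs (f n G - Fx G) * He <= B n * (1 - G)).
      { apply Rle_trans with (Rabs (f n G - Fx G) * 1). apply Rmult_le_compat_l. apply Rabs_pos. lra. lra. }
      assert (B n * (1 - G) <= B n * (rho (S n) * (1 - x))) by (apply Rmult_le_compat_l; auto; lra).
      unfold Fx. unfold dl, e1 in *.
      unfold Fx in *. lra. }
  set (q := fun n => g2 n / (1 - rho n)).
  set (sg := fun n => sum_f_R0 (fun i => Rabs (m n (S i) / (INR (S i) * (1 - rho n)) - lam (S i)) * INR (S i)) N).
  set (muJ := fun n => m n (S (S N)) / (INR (S (S N)) * (1 - rho n))).
  set (kJ := INR (S (S N)) / INR (fact (S (S N)))).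
  set (w := fun n => sg n + muJ n * kJ).
  set (CP := CPc c N). set (CM := CMc c N). set (C2 := C2c c N). set (CD := CDc c N).
  set (K2 := C2 + CD ^ 2 * exp CD).
  set (Rt := fun n => exp CP * (CD * exp CD * ((1 - rho n) * (1 + q n * / 2)) * (CM + w n)
                 + CM * (q n * / 2) + K2 * ((1 - rho n) * (1 + q n * / 2)) * (1 + q n * / 2) + w n)).
  assert (Hs0 : Un_cv (fun n => 1 - rho n) 0).
  { replace 0 with (1 - 1) by ring. apply CV_minus. apply cv_const. auto. }
  assert (Hq0 : Un_cv q 0) by exact Hg2lim.
  assert (Hsg0 : Un_cv sg 0).
  { apply (cv_sum0 (fun i n => Rabs (m n (S i) / (INR (S i) * (1 - rho n)) - lam (S i)) * INR (S i)) N).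
    intros i Hi. replace 0 with (0 * INR (S i)) by ring. apply CV_mult; [| apply cv_const].
    apply (cv_abs0 (fun n => m n (S i) / (INR (S i) * (1 - rho n)) - lam (S i))).
    replace 0 with (lam (S i) - lam (S i)) by ring. apply CV_minus; [| apply cv_const]. apply Hlam. lia. }
  assert (HmuJ0 : Un_cv muJ 0) by (rewrite <- HlamJ; apply Hlam; lia).
  assert (Hw0 : Un_cv w 0).
  { replace 0 with (0 + 0 * kJ) by ring. apply CV_plus; auto. apply CV_mult; auto. apply cv_const. }
  assert (HRt : Un_cv Rt (exp CP * (CD * exp CD * (0 * (1 + 0 * / 2)) * (CM + 0)
                 + CM * (0 * / 2) + K2 * (0 * (1 + 0 * / 2)) * (1 + 0 * / 2) + 0))).
  { unfold Rt. apply CV_mult. apply cv_const.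
    apply CV_plus; auto. apply CV_plus. apply CV_plus.
    - apply CV_mult; [apply CV_mult; [apply cv_const | apply CV_mult; [auto | apply CV_plus; [apply cv_const | apply CV_mult; [auto | apply cv_const]]]] |].
      apply CV_plus; [apply cv_const | auto].
    - apply CV_mult; [apply cv_const | apply CV_mult; [auto | apply cv_const]].
    - apply CV_mult; [apply CV_mult; [apply cv_const | apply CV_mult; [auto | apply CV_plus; [apply cv_const | apply CV_mult; [auto | apply cv_const]]]] |].
      apply CV_plus; [apply cv_const | apply CV_mult; [auto | apply cv_const]]. }
  replace (exp CP * (CD * exp CD * (0 * (1 + 0 * / 2)) * (CM + 0)
                 + CM * (0 * / 2) + K2 * (0 * (1 + 0 * / 2)) * (1 + 0 * / 2) + 0)) with 0 in HRt by ring.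
  assert (Hdlr : forall n, dl (S n) = Rt (S n) * (1 - rho (S n))).
  { intros n. assert (rho (S n) < 1) by (apply Hrho1; lia).
    unfold dl, Rt, delta_loc, e1, w, sg, muJ, kJ, q. fold CP CM C2 CD. unfold K2.
    pose proof (INR_fact_lt_0 (S (S N))). pose proof (pos_INR (S N)). rewrite (S_INR (S N)).
    field. repeat split; lra. }
  assert (Hdl : forall e, e > 0 -> exists N0, forall n, (n >= N0)%nat -> dl (S n) <= e * (1 - rho (S n))).
  { intros e He. destruct (HRt e He) as [N1 HN1]. exists N1. intros n Hn.
    specialize (HN1 (S n) ltac:(lia)). unfold Rdist in HN1. rewrite Rminus_0_r in HN1.
    apply Rabs_def2 in HN1. rewrite Hdlr. assert (rho (S n) < 1) by (apply Hrho1; lia).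
    apply Rmult_le_compat_r; lra. }
  assert (HB : Un_cv B 0).
  { apply (rec_to_0 B rho dl HBpos). intros n; unfold B; simpl; lra.
    intros n; split; [apply Hrho0 | apply Hrho1; lia]. exact Hdl. exact Hdiv. }
  assert (Hcv : forall x, 0 <= x <= 1 -> Un_cv (fun n => f n x) (Fx x)).
  { intros x Hx.
    assert (H0 : Un_cv (fun n => (f n x - Fx x) + Fx x) (0 + Fx x)).
    { apply CV_plus; [| apply cv_const].
      apply (cv_squeeze0 _ B 0); auto. intros n _. eapply Rle_trans. apply Hmain; auto.
      specialize (HBpos n). apply Rle_trans with (B n * 1). apply Rmult_le_compat_l; lra. lra. }
    rewrite Rplus_0_l in H0. revert H0. apply cv_ext. intros; ring. }
  assert (Hf1 : forall n, f n 1 = 1).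
  { induction n. reflexivity. unfold f; simpl fpr. fold f.
    rewrite !pmf_pgf1 by (first [apply Hxi | apply Heps]; lia). rewrite IHn. ring. }
  assert (HF1 : forall x, 0 <= x <= 1 -> Rabs (1 - Fx x) <= B0 * (1 - x)).
  { intros x Hx. apply (Hmain 0%nat x Hx). }
  assert (HLpos : forall n k, 0 <= L n k) by (intros; apply HLP).
  assert (Hf : forall n x, 0 <= x <= 1 -> infinite_sum (fun k => L n k * x ^ k) (f n x)) by (intros; apply HLP; auto).
  exists (plim L). split.
  - split. split. apply (plim_nonneg L f Fx HLpos Hf Hf1 Hcv).
    apply (plim_sum1 L f Fx B0 HLpos Hf Hf1 Hcv HB0 HF1).
    intros x Hx. rewrite mu_Pp. fold c. change (exp (Pp c N (1 - x))) with (Fx x).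
    destruct (Rle_lt_or_eq_dec x 1 (proj2 Hx)) as [Hlt | Heq].
    + apply (plim_gf L f Fx HLpos Hf Hf1 Hcv). lra.
    + subst x. rewrite (F_1 Fx B0 HF1). apply (IS_ext (plim L)). intros; rewrite pow1; ring.
      apply (plim_sum1 L f Fx B0 HLpos Hf Hf1 Hcv HB0 HF1).
  - apply (plim_cv L f Fx HLpos Hf Hf1 Hcv).
Qed.
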